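(* Let $\mathcal{S}_1,\dots,\mathcal{S}_n\subseteq\mathbb{R}^D$ be independent linear subspaces (i.e. $\sum_{\ell=1}^n d_\ell=\dim(\sum_\ell\mathcal{S}_\ell)$, $d_\ell=\dim\mathcal{S}_\ell$), and let $\mathcal{X}=\{\boldsymbol{x}_1,\dots,\boldsymbol{x}_N\}\subseteq\bigcup_\ell\mathcal{S}_\ell$ consist of unit-norm vectors such that each $\mathcal{S}_\ell$ contains at least $d_\ell$ points of $\mathcal{X}$ spanning $\mathcal{S}_\ell$. Let $k\ge\sum_\ell d_\ell$ and $t>0$ an integer. Run the following procedure with $\lambda=\infty$: (1) compute $\mathcal{X}_0=\mathcal{X}_0^{(k)}$ by farthest first search ($\mathcal{X}_0^{(1)}=\{\boldsymbol{x}_j\}$ for an arbitrary $j$; for $i=1,\dots,k-1$, $\mathcal{X}_0^{(i+1)}=\mathcal{X}_0^{(i)}\cup\{\boldsymbol{x}\}$ with $\boldsymbol{x}\in\arg\max_{\boldsymbol{x}_j\in\mathcal{X}}f_\infty(\boldsymbol{x}_j,\mathcal{X}_0^{(i)})$), and for each $j$ let $\boldsymbol{c}_j$ be an optimal solution of $\min_{\boldsymbol{c}\in\mathbb{R}^N}\|\boldsymbol{c}\|_1$ s.t. $\boldsymbol{x}_j=\sum_{i:\boldsymbol{x}_i\in\mathcal{X}_0}c_i\boldsymbol{x}_i$; (2) set $\tilde{\boldsymbol{c}}_j=\boldsymbol{c}_j/\|\boldsymbol{c}_j\|_2$ and, for all $i,j$, $W_{ij}=1$ if $\tilde{\boldsymbol{c}}_j$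 is one of the $t$ nearest neighbors of $\tilde{\boldsymbol{c}}_i$ (largest inner products with $\tilde{\boldsymbol{c}}_i$) and $\langle\tilde{\boldsymbol{c}}_j,\tilde{\boldsymbol{c}}_i\rangle>0$, and $W_{ij}=0$ otherwise; (3) set $\mathbf{A}=\mathbf{W}+\mathbf{W}^\top$. Then $\mathbf{A}$ has no wrong connections: $A_{ij}\neq0$ only if $\boldsymbol{x}_i$ and $\boldsymbol{x}_j$ lie in the same subspace.
   Context: $f_\infty(\boldsymbol{x}_j,\mathcal{X}_0):=\min_{\boldsymbol{c}\in\mathbb{R}^N}\|\boldsymbol{c}\|_1$ subject to $\boldsymbol{x}_j=\sum_{i:\boldsymbol{x}_i\in\mathcal{X}_0}c_i\boldsymbol{x}_i$, with value $\infty$ if infeasible. *)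

(* Defs.v *)
From HB Require Import structures.
From mathcomp Require Import all_boot all_order all_algebra.
From mathcomp Require Import all_classical all_reals ereal.
Set Implicit Arguments. Unset Strict Implicit. Unset Printing Implicit Defensive.
Import Order.TTheory GRing.Theory Num.Theory.
Local Open Scope ring_scope.
Local Open Scope classical_set_scope.

Section SubspaceClustering.
Variables (R : realType) (D N : nat).

Definition vnorm (v : 'rV[R]_D) : R := Num.sqrt (\sum_a v 0 a ^+ 2).

Definition l1norm (c : 'I_N -> R) : R := \sum_i `|c i|.
Definition l2norm (c : 'I_N -> R) : R := Num.sqrt (\sum_i c i ^+ 2).
Definition inner (c c' : 'I_N -> R) : R := \sum_i c i * c' i.
Definition normalize (c : 'I_N -> R) : 'I_N -> R := fun i => c i / l2norm c.

Definition represents (x : 'I_N -> 'rV[R]_D) (X0 : {set 'I_N}) (j : 'I_N)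
  (c : 'I_N -> R) : Prop := x j = \sum_(i in X0) c i *: x i.

(* f_infty(x_j, X0) := min ||c||_1 s.t. x_j = sum_{i in X0} c_i x_i ;
   +oo if infeasible (infimum of the empty set). *)
Definition f_inf (x : 'I_N -> 'rV[R]_D) (j : 'I_N) (X0 : {set 'I_N}) : \bar R :=
  ereal_inf [set (l1norm c)%:E | c in [set c | represents x X0 j c]].

Definition l1_optimal (x : 'I_N -> 'rV[R]_D) (X0 : {set 'I_N}) (j : 'I_N)
  (c : 'I_N -> R) : Prop :=
  represents x X0 j c /\
  forall c', represents x X0 j c' -> l1norm c <= l1norm c'.

Definition X0_at (sel : nat -> 'I_N) (i : nat) : {set 'I_N} :=
  [set sel (nat_of_ord m) | m : 'I_i].

Definition farthest_first (x : 'I_N -> 'rV[R]_D) (k : nat) (sel : nat -> 'I_N)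
  : Prop :=
  forall i, (0 < i < k)%N ->
    forall j, (f_inf x j (X0_at sel i) <= f_inf x (sel i) (X0_at sel i))%E.

Definition nearest_nbrs (ct : 'I_N -> 'I_N -> R) (t : nat)
  (Nb : 'I_N -> {set 'I_N}) : Prop :=
  forall i,
    [/\ Nb i \subset [set~ i],
        #|Nb i| = minn t N.-1
      & forall j j', j \in Nb i -> j' \notin Nb i -> j' != i ->
          inner (ct j') (ct i) <= inner (ct j) (ct i)].

Definition affinity_W (ct : 'I_N -> 'I_N -> R) (Nb : 'I_N -> {set 'I_N})
  : 'M[R]_N :=
  \matrix_(i, j) (if (j \in Nb i) && (0 < inner (ct j) (ct i)) then 1 else 0).

Definition affinity_A (ct : 'I_N -> 'I_N -> R) (Nb : 'I_N -> {set 'I_N})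
  : 'M[R]_N := affinity_W ct Nb + (affinity_W ct Nb)^T.

End SubspaceClustering.

(* Main.v *)
Require Import Defs.
From HB Require Import structures.
From mathcomp Require Import all_boot all_order all_algebra.
From mathcomp Require Import all_classical all_reals ereal.
Import Order.TTheory GRing.Theory Num.Theory.
Local Open Scope ring_scope.

Lemma dir0 (R : realType) (D n : nat) (S : 'I_n -> 'M[R]_D)
  (Hindep : (\sum_(l < n) \rank (S l))%N = \rank (\sum_(l < n) S l)%MS)
  l (v : 'rV[R]_D) :
  (v <= S l)%MS -> (v <= \sum_(l' | l' != l) S l')%MS -> v = 0.
Proof.
move=> h1 h2.
have dx : mxdirect (\sum_(l < n) S l) by apply/mxdirectP; rewrite /= -Hindep.
move/mxdirect_sumsP: dx => /(_ l isT) H.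
apply/eqP; rewrite -submx0 -H sub_capmx h1 /=.
exact: h2.
Qed.

Lemma supp (R : realType) (D n N : nat) (S : 'I_n -> 'M[R]_D) (x : 'I_N -> 'rV[R]_D)
  (Hindep : (\sum_(l < n) \rank (S l))%N = \rank (\sum_(l < n) S l)%MS)
  (Hunion : forall j, exists l, (x j <= S l)%MS)
  X0 j c l : l1_optimal x X0 j c -> (x j <= S l)%MS ->
  forall m, c m != 0 -> (x m <= S l)%MS.
Proof.
move=> [Hrep Hopt] hj.
pose P i := (i \in X0) && (x i <= S l)%MS.
pose c' i := if P i then c i else 0.
set u := \sum_(i in X0 | (x i <= S l)%MS) c i *: x i.
set w := \sum_(i in X0 | ~~ (x i <= S l)%MS) c i *: x i.
have Exj : x j = u + w by rewrite Hrep (bigID (fun i => (x i <= S l)%MS)).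
have uS : (u <= S l)%MS by apply: summx_sub => i /andP[_ ?]; exact: scalemx_sub.
have w0 : w = 0.
  apply: (@dir0 _ _ _ _ Hindep l).
    have -> : w = x j + - u by rewrite Exj addrC addKr.
    by apply: addmx_sub => //; rewrite eqmx_opp.
  apply: summx_sub => i /andP[_ ni]; apply: scalemx_sub.
  have [l' hl'] := Hunion i.
  apply: (sumsmx_sup l') => //; apply: contraNneq ni => <-; exact: hl'.
have rep' : represents x X0 j c'.
  rewrite /represents Exj w0 addr0 /u big_mkcondr /=.
  apply: eq_bigr => i iX; rewrite /c' /P iX /=.
  by case: ifP => _ //; rewrite scale0r.
have := Hopt _ rep'.
rewrite /l1norm (bigID P) /= [X in _ <= X](bigID P) /=.
have -> : \sum_(i | ~~ P i) `|c' i| = 0.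
  by apply: big1 => i /negbTE nP; rewrite /c' nP normr0.
rewrite addr0 [X in _ <= X](eq_bigr (fun i => `|c i|)); last first.
  by move=> i Pi; rewrite /c' Pi.
rewrite -[X in _ <= X]addr0 lerD2l => hle.
have z : \sum_(i | ~~ P i) `|c i| = 0.
  by apply/eqP; rewrite eq_le hle sumr_ge0.
move=> m cm; apply: contraNT cm => nm.
have nPm : ~~ P m by rewrite /P negb_and nm orbT.
by rewrite -normr_eq0; apply/eqP; apply: (psumr_eq0P _ z).
Qed.

Lemma inner_supp (R : realType) N (a b : 'I_N -> R) :
  0 < inner (normalize a) (normalize b) -> exists m, a m != 0 /\ b m != 0.
Proof.
move=> h; apply/not_existsP => hn; move: h; rewrite /inner big1 ?ltxx //.
move=> i _; rewrite /normalize.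
have := hn i; case: (eqVneq (a i) 0) => [->|ha]; first by rewrite mul0r mul0r.
case: (eqVneq (b i) 0) => [->|hb]; first by rewrite mul0r mulr0.
by case.
Qed.

Theorem theorem4 (R : realType) (D n N : nat)
  (S : 'I_n -> 'M[R]_D) (x : 'I_N -> 'rV[R]_D)
  (* independent subspaces: sum of dimensions = dimension of the sum *)
  (Hindep : (\sum_(l < n) \rank (S l))%N = \rank (\sum_(l < n) S l)%MS)
  (* X is a set of unit-norm points in the union of the subspaces *)
  (Hinj : injective x)
  (Hunion : forall j, exists l, (x j <= S l)%MS)
  (Hunit : forall j, vnorm (x j) = 1)
  (* each S_l is spanned by the points of X it contains *)
  (Hspan : forall l, (S l <= \sum_(j | (x j <= S l)%MS) <<x j>>)%MS)
  (k t : nat) (Hk : (\sum_(l < n) \rank (S l) <= k)%N) (Ht : (0 < t)%N)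
  (* step (1): farthest first search, then l1-optimal coefficients *)
  (sel : nat -> 'I_N) (Hsel : farthest_first x k sel)
  (C : 'I_N -> 'I_N -> R) (HC : forall j, l1_optimal x (X0_at sel k) j (C j))
  (* step (2): normalization and t nearest neighbours *)
  (Nb : 'I_N -> {set 'I_N})
  (HNb : nearest_nbrs (fun j => normalize (C j)) t Nb) :
  (* step (3): A = W + W^T has no wrong connections *)
  forall i j, affinity_A (fun j => normalize (C j)) Nb i j != 0 ->
    exists l, (x i <= S l)%MS /\ (x j <= S l)%MS.
Proof.
have key : forall a b, 0 < inner (normalize (C a)) (normalize (C b)) ->
    exists l, (x a <= S l)%MS /\ (x b <= S l)%MS.
  move=> a b /(@inner_supp _ _ _ _) [m [ha hb]].
  have [l hl] := Hunion a; have [l' hl'] := Hunion b.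
  have ml := @supp _ _ _ _ _ _ Hindep Hunion _ _ _ _ (HC a) hl _ ha.
  have ml' := @supp _ _ _ _ _ _ Hindep Hunion _ _ _ _ (HC b) hl' _ hb.
  case: (eqVneq l' l) => [e|ne]; first by exists l; rewrite -e in hl *; split.
  have m0 : x m = 0.
    apply: (@dir0 _ _ _ _ Hindep l) => //.
    exact: (sumsmx_sup l').
  by move: (Hunit m); rewrite m0 /vnorm big1 ?sqrtr0 => [/eqP|a' _]; rewrite ?mxE ?expr0n // eq_sym oner_eq0.
move=> i j; rewrite /affinity_A /affinity_W !mxE.
case: ifP => [/andP[_ h1] _|_]; first by have [l [h h']] := key _ _ h1; exists l.
case: ifP => [/andP[_ h1] _|_]; last by rewrite addr0 eqxx.
by have [l [h h']] := key _ _ h1; exists l.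
Qed.
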